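(* With $\tau=\frac{1}{4(n-1)}\left(u_2-\frac{n-2}{2(n-1)}u_1^2\right)$, $e=\frac{\partial}{\partial u_{n-1}}$, and $E^i:=\sum_j g^{ij}\frac{\partial\tau}{\partial u_j}$, one has $E^i=\sum_{l,j}g^{il}\eta_{lj}e^j$ for all $i$.
   Context: $n\ge2$. $u_k=\sum_{1\le i_1<\dots<i_k\le n}p_{i_1}^2\cdots p_{i_k}^2$ ($k=1,\dots,n$), $u_0=1$, $u_k=0$ for $k<0$ or $k>n$, coordinates on $\mathbb{C}^n/B_n$. $g^{ij}(u)=\sum_{k,l}\frac{1-\delta^{kl}}{p_kp_l}\frac{\partial u_i}{\partial p_k}\frac{\partial u_j}{\partial p_l}$, $\eta^{ij}(u)=\frac{\partial g^{ij}}{\partial u_{n-1}}(u)=4(2n-i-j)u_{i+j-n-1}$ (nondegenerate), and $\eta_{ij}$ denotes the inverse matrix of $\eta^{ij}$. *)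

(* Defs.v *)
From HB Require Import structures.
From mathcomp Require Import all_boot all_order all_algebra.
From mathcomp Require Import mpoly.
Set Implicit Arguments. Unset Strict Implicit. Unset Printing Implicit Defensive.
Import Order.TTheory GRing.Theory Num.Theory.
Local Open Scope ring_scope.

Section Defs.
Variable F : numClosedFieldType.
Variable n : nat.

(* Indices 1..n of the paper are represented by i : 'I_n, with paper index i.+1. *)

Definition upoly (k : nat) : {mpoly F[n]} :=
  \sum_(S : {set 'I_n} | #|S| == k) \prod_(i in S) ('X_i ^+ 2).

Definition uval (p : 'I_n -> F) (k : int) : F :=
  if (k < 0)%R then 0 else (upoly `|k|%N).@[p].

Definition uvec (p : 'I_n -> F) : 'I_n -> F := fun j => uval p (j.+1)%:Z.

Definition gup (p : 'I_n -> F) (i j : 'I_n) : F :=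
  \sum_(k < n) \sum_(l < n)
     ((if k == l then 0 else 1) / (p k * p l))
     * ((upoly i.+1)^`M(k)).@[p] * ((upoly j.+1)^`M(l)).@[p].

Definition etaup (p : 'I_n -> F) : 'M[F]_n :=
  \matrix_(i < n, j < n)
     (4 * (2 * n - i.+1 - j.+1)%N%:R * uval p ((i.+1 + j.+1)%:Z - n%:Z - 1)).

Definition etalow (p : 'I_n -> F) : 'M[F]_n := invmx (etaup p).

(* the flat coordinate function u_k (k = 1..n) as a polynomial in the
   coordinates u_1..u_n (variable 'X_j stands for u_{j.+1}) *)
Definition Uvar (k : nat) : {mpoly F[n]} := \sum_(j < n | j.+1 == k) 'X_j.

Definition tau : {mpoly F[n]} :=
  ((4 * (n - 1))%N%:R)^-1 *:
    (Uvar 2 - ((n - 2)%N%:R / (2 * (n - 1))%N%:R) *: (Uvar 1 ^+ 2)).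

Definition dtau (p : 'I_n -> F) (j : 'I_n) : F := (tau^`M(j)).@[uvec p].

Definition evec (j : 'I_n) : F := if j.+1 == (n - 1)%N then 1 else 0.

Definition Evec (p : 'I_n -> F) (i : 'I_n) : F :=
  \sum_(j < n) gup p i j * dtau p j.

End Defs.

(* Main.v *)
Require Import Defs.
From HB Require Import structures.
From mathcomp Require Import all_boot all_order all_algebra.
From mathcomp Require Import fingroup perm.
From mathcomp Require Import mpoly zify ring.
Import Order.TTheory GRing.Theory Num.Theory.
Local Open Scope ring_scope.

Lemma dX (F : numClosedFieldType) n (i j : 'I_n) :
  ('X_i : {mpoly F[n]})^`M(j) = (i == j)%:R.
Proof.
rewrite mderivX mnm1E; case: eqP => [->|_]; last by rewrite scale0r.
by rewrite (_ : (U_(j) - U_(j))%MM = 0%MM) ?mpolyX0 ?scale1r //; apply/mnmP => k; rewrite !mnmE subnn.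
Qed.

Lemma dUvar (F : numClosedFieldType) n k (j : 'I_n) :
  (Uvar F n k)^`M(j) = (j.+1 == k)%:R.
Proof.
rewrite /Uvar raddf_sum /=.
under eq_bigr => i _ do rewrite dX.
case: (boolP (j.+1 == k)) => H.
  rewrite (bigD1 j) //= eqxx big1 ?addr0 // => i /andP[_ /negPf ->] //.
rewrite big1 // => i /eqP Hi; case: eqP => // E; move: H; by rewrite -E Hi eqxx.
Qed.

Lemma meval_nat (F : numClosedFieldType) n (v : 'I_n -> F) k :
  (k%:R : {mpoly F[n]}).@[v] = k%:R.
Proof. by rewrite -mpolyC_nat mevalC. Qed.

Lemma Uvar1_val (F : numClosedFieldType) m (p : 'I_m.+2 -> F) :
  (Uvar F m.+2 1).@[uvec p] = uval p 1.
Proof.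
rewrite /Uvar raddf_sum /= big_mkcond big_ord_recl /= big1 ?addr0.
  by rewrite mevalXU.
by move=> i _.
Qed.

Lemma dtauE (F : numClosedFieldType) m (p : 'I_m.+2 -> F) (j : 'I_m.+2) :
  dtau p j = ((4 * (m.+2 - 1))%N%:R)^-1 * ((j.+1 == 2)%:R -
     ((m.+2 - 2)%N%:R / (2 * (m.+2 - 1))%N%:R) * (2 * (j.+1 == 1)%:R * uval p 1)).
Proof.
rewrite /dtau /tau mderivZ mderivB mderivZ expr2 mderivM !dUvar.
rewrite mevalZ mevalB mevalZ mevalD !mevalM !meval_nat Uvar1_val.
ring.
Qed.

Lemma uval_neg (F : numClosedFieldType) n (p : 'I_n -> F) (x : int) :
  (x < 0)%R -> uval p x = 0.
Proof. by rewrite /uval => ->. Qed.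

Lemma uval0 (F : numClosedFieldType) n (p : 'I_n -> F) : uval p 0 = 1.
Proof.
rewrite /uval ltxx /= /upoly (big_pred1 set0) ?big_set0 ?meval1 //.
by move=> S; rewrite /= cards_eq0.
Qed.

Lemma nz1m (F : numClosedFieldType) m : (1 + m%:R : F) != 0.
Proof. have: ((1 + m)%N%:R : F) != 0 by rewrite pnatr_eq0. by rewrite natrD. Qed.

Lemma eta_dtau (F : numClosedFieldType) m (p : 'I_m.+2 -> F) (i : 'I_m.+2) :
  \sum_j etaup p i j * dtau p j = evec F i.
Proof.
rewrite 2!big_ord_recl big1 ?addr0; last first.
  by move=> j _; rewrite dtauE /=; ring.
rewrite !mxE !dtauE /= /evec.
case: i => k Hk /=; rewrite /bump /= addn0.
have [Hlt|Hge] := ltnP k m.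
  rewrite (@uval_neg _ _ p (((k.+1 + 1)%N)%:Z - (m.+2)%:Z - 1)); last lia.
  rewrite (@uval_neg _ _ p (((k.+1 + 2)%N)%:Z - (m.+2)%:Z - 1)); last lia.
  rewrite (_ : (k.+1 == (m.+2 - 1)%N) = false); last lia.
  ring.
have [->|Hne] := eqVneq k m.
  rewrite (@uval_neg _ _ p (((m.+1 + 1)%N)%:Z - (m.+2)%:Z - 1)); last lia.
  rewrite (_ : (((m.+1 + 2)%N)%:Z - (m.+2)%:Z - 1) = 0); last lia.
  rewrite uval0 (_ : (m.+1 == (m.+2 - 1)%N) = true); last lia.
  rewrite (_ : (2 * m.+2 - m.+1 - 2)%N = m.+1); last lia.
  rewrite (_ : (m.+2 - 1)%N = m.+1); last lia.
  rewrite !natrM; field; do ?[apply/andP; split]; rewrite ?nz1m ?pnatr_eq0 //.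
have -> : k = m.+1 by move/eqP: Hne; lia.
rewrite (_ : (((m.+2 + 2)%N)%:Z - (m.+2)%:Z - 1) = 1); last lia.
rewrite (_ : (((m.+2 + 1)%N)%:Z - (m.+2)%:Z - 1) = 0); last lia.
rewrite uval0 (_ : (m.+2 == (m.+2 - 1)%N) = false); last lia.
rewrite (_ : (2 * m.+2 - m.+2 - 1)%N = m.+1); last lia.
rewrite (_ : (2 * m.+2 - m.+2 - 2)%N = m); last lia.
rewrite (_ : (m.+2 - 1)%N = m.+1); last lia.
rewrite (_ : (m.+2 - 2)%N = m); last lia.
rewrite !natrM; field; do ?[apply/andP; split]; rewrite ?nz1m ?pnatr_eq0 //.
Qed.

Lemma eta_unit (F : numClosedFieldType) m (p : 'I_m.+2 -> F) :
  etaup p \in unitmx.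
Proof.
pose s := perm (@rev_ord_inj m.+2).
have Htr : is_trig_mx (col_perm s (etaup p)).
  apply/is_trig_mxP => i j Hij; rewrite !mxE permE /=.
  rewrite (@uval_neg _ _ p); first by rewrite mulr0.
  case: i j Hij => i Hi [j Hj] /= Hij; lia.
have Hd := det_trig Htr.
have Hd2 : \det (col_perm s (etaup p)) = \det (etaup p) * \det (perm_mx s^-1).
  by rewrite col_permE det_mulmx.
rewrite unitmxE unitfE.
apply/negP => /eqP H0; move: Hd; rewrite Hd2 H0 mul0r => /esym /eqP.
rewrite prodf_seq_eq0 => /hasP [i _ /=].
rewrite !mxE /s permE /=.
case: i => i Hi /=.
rewrite (_ : (((i.+1 + (m.+2 - i.+1).+1)%N)%:Z - (m.+2)%:Z - 1) = 0); last lia.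
rewrite uval0 mulr1 (_ : (2 * m.+2 - i.+1 - (m.+2 - i.+1).+1)%N = m.+1); last lia.
by rewrite mulf_eq0 !pnatr_eq0.
Qed.

Theorem mainTheorem16 (F : numClosedFieldType) (n : nat) (p : 'I_n -> F) :
  (2 <= n)%N ->
  (forall k : 'I_n, p k != 0) ->
  forall i : 'I_n,
    Evec p i = \sum_(l < n) \sum_(j < n) gup p i l * etalow p l j * @evec F n j.
Proof.
case: n p => [|[|m]] p // _ _ i.
pose d : 'cV[F]_(m.+2) := \col_j dtau p j.
pose e : 'cV[F]_(m.+2) := \col_j evec F j.
have He : etaup p *m d = e.
  apply/matrixP => k l; rewrite !mxE -(@eta_dtau _ _ p).
  by apply/eq_bigr => j _; rewrite [d j l]mxE.
have Hd : d = etalow p *m e by rewrite -He /etalow mulKmx // (@eta_unit _ _ p).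
rewrite /Evec; apply: eq_bigr => l _.
rewrite (_ : dtau p l = d l 0); last by rewrite [d l 0]mxE.
rewrite Hd mxE mulr_sumr; apply/eq_bigr => j _; by rewrite [e j 0]mxE mulrA.
Qed.
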